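(* Let $N=\{1,\dots,n\}$ be agents and $M$ a finite set of chores, where each agent $i$ has an additive valuation $V_i$ with $V_i(\{j\})\le 0$ for all $j\in M$ and $V_i(M)=-1$, and shares $s_i\in(0,1]$ with $\sum_i s_i=1$. Let $X=\langle X_1,\dots,X_n\rangle$ be the allocation that assigns all chores of $M$ to a single agent with the largest share (ties broken arbitrarily) and nothing to all other agents. Then $V_i(X_i)\ge n\,\mathsf{WMMS}_i$ for every $i\in N$.
   Context: For agent $i$, $\mathsf{WMMS}_i:=\max_{\langle Y_1,\dots,Y_n\rangle\in\Pi(M)}\min_{k\in N}V_i(Y_k)\frac{s_i}{s_k}$, where $\Pi(M)$ is the set of ordered partitions of $M$ into $n$ possibly empty bundles (bundle $Y_k$ for agent $k$). Valuations are additive: $V_i(S)=\sum_{j\in S}V_i(\{j\})$. *)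

(* Defs.v *)
From HB Require Import structures.
From mathcomp Require Import all_boot all_order all_algebra.
Set Implicit Arguments. Unset Strict Implicit. Unset Printing Implicit Defensive.
Import Order.TTheory GRing.Theory Num.Theory.
Local Open Scope ring_scope.

(* An ordered partition <Y_1,...,Y_n> of the chore set M into n possibly
   empty bundles is represented by the assignment Y : {ffun M -> 'I_n}
   (chore j goes to agent Y j); bundle k is [set j | Y j == k]. *)
Definition bundle (n : nat) (M : finType) (Y : {ffun M -> 'I_n}) (k : 'I_n)
  : {set M} := [set j | Y j == k].

Definition Vof (R : realFieldType) (n : nat) (M : finType)
  (v : 'I_n -> M -> R) (i : 'I_n) (S : {set M}) : R := \sum_(j in S) v i j.

(* min_{k in N} V_i(Y_k) * s_i / s_k ; min over a nonempty finite range,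
   seeded with the k = i term (min is idempotent, so this is exact). *)
Definition wmin (R : realFieldType) (n : nat) (M : finType)
  (v : 'I_n -> M -> R) (s : 'I_n -> R) (i : 'I_n) (Y : {ffun M -> 'I_n}) : R :=
  \big[Num.min/ Vof v i (bundle Y i) * (s i / s i)]_(k : 'I_n)
     (Vof v i (bundle Y k) * (s i / s k)).

(* WMMS_i = max over ordered partitions Y of wmin; seeded with the value of
   the partition giving everything to agent i (max is idempotent). *)
Definition WMMS (R : realFieldType) (n : nat) (M : finType)
  (v : 'I_n -> M -> R) (s : 'I_n -> R) (i : 'I_n) : R :=
  \big[Num.max/ wmin v s i [ffun=> i]]_(Y : {ffun M -> 'I_n}) wmin v s i Y.

(* Main.v *)
Require Import Defs.
From HB Require Import structures.
From mathcomp Require Import all_boot all_order all_algebra.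
Import Order.TTheory GRing.Theory Num.Theory.
Local Open Scope ring_scope.

Lemma wmin_le (R : realFieldType) (n : nat) (M : finType)
  (v : 'I_n -> M -> R) (s : 'I_n -> R) (i : 'I_n) (Y : {ffun M -> 'I_n}) k :
  wmin v s i Y <= Vof v i (bundle Y k) * (s i / s k).
Proof.
rewrite /wmin (bigD1 k) //= ge_min lexx //.
Qed.

Lemma WMMS_le (R : realFieldType) (n : nat) (M : finType)
  (v : 'I_n -> M -> R) (s : 'I_n -> R) (i : 'I_n) (P : R -> Prop) :
  (forall Y, P (wmin v s i Y)) -> P (WMMS v s i).
Proof.
move=> H; rewrite /WMMS; apply: (big_ind P) => //.
by move=> x y Px Py; case: leP.
Qed.

Theorem lemma2 (R : realFieldType) (n : nat) (M : finType)
  (v : 'I_n -> M -> R) (s : 'I_n -> R)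
  (hneg : forall (i : 'I_n) (j : M), v i j <= 0)
  (hnorm : forall i : 'I_n, Vof v i [set: M] = -1)
  (hs : forall i : 'I_n, 0 < s i <= 1)
  (hsum : \sum_(i < n) s i = 1)
  (a : 'I_n) (ha : forall k : 'I_n, s k <= s a) :
  let X : {ffun M -> 'I_n} := [ffun=> a] in
  forall i : 'I_n, n%:R * WMMS v s i <= Vof v i (bundle X i).
Proof.
move=> X i.
have Vle0 : forall k (S : {set M}), Vof v k S <= 0.
  by move=> k S; rewrite /Vof; apply: sumr_le0 => j _; apply: hneg.
have spos : forall k, 0 < s k by move=> k; case/andP: (hs k).
case: (eqVneq i a) => [->|ne].
- have -> : bundle X a = [set: M].
    by apply/setP => j; rewrite /bundle !inE ffunE eqxx.
  rewrite hnorm.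
  apply: (@WMMS_le _ _ _ v s a (fun w => n%:R * w <= -1)) => Y.
  rewrite mulr_natl -[n in _ *+ n]card_ord -sumr_const.
  apply: (le_trans (y := \sum_(k < n) Vof v a (bundle Y k))).
    apply: ler_sum => k _; apply: le_trans (@wmin_le _ _ _ v s a Y k) _.
    rewrite -[X in _ <= X]mulr1; apply: ler_wnM2l; first exact: Vle0.
    by rewrite ler_pdivlMr // mul1r.
  rewrite -(hnorm a) /Vof.
  rewrite le_eqVlt; apply/orP; left; apply/eqP; rewrite (partition_big (fun j => Y j) xpredT) //=.
  by apply: eq_bigr => k _; apply: eq_bigl => j; rewrite /bundle !inE.
- have -> : bundle X i = set0.
    by apply/setP => j; rewrite /bundle !inE ffunE eq_sym (negbTE ne).
  rewrite /Vof big_set0.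
  apply: mulr_ge0_le0 => //.
  apply: (@WMMS_le _ _ _ v s i (fun w => w <= 0)) => Y.
  apply: le_trans (@wmin_le _ _ _ v s i Y i) _.
  rewrite divff ?mulr1 ?Vle0 //; exact: lt0r_neq0.
Qed.
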